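(* Let $\mathbf{A}=[\mathbf{a}_1,\dots,\mathbf{a}_L]\in\mathbb{C}^{N\times L}$ have unit-norm columns, and let $\mu=\max_{p\neq q}|\langle \mathbf{a}_p,\mathbf{a}_q\rangle|$ be its mutual coherence, assumed to satisfy $\mu>0$. Let $K$ be a positive integer with $K<\tfrac12(\mu^{-1}+1)$, let $\mathcal{S}\subset\{1,\dots,L\}$ with $|\mathcal{S}|=K$, and let $\mathbf{x}\in\mathbb{C}^L$ be given by $x_i=1$ for $i\in\mathcal{S}$ and $x_i=0$ otherwise (the case $M=1$, i.e. constellation $\mathcal{B}=\{1\}$). Let the observation be noiseless, $\mathbf{y}=\mathbf{A}\mathbf{x}=\sum_{i\in\mathcal{S}}\mathbf{a}_i$. Then the Match and Decode (MAD) algorithm with $M=1$ (defined in the context), run with inputs $\mathbf{A},\mathbf{y},K$ and no partial information, outputs $\hat{\mathbf{x}}^{(K)}=\mathbf{x}$; in particular the recovered codeword $\hat{\mathbf{s}}=\mathbf{A}\hat{\mathbf{x}}^{(K)}$ equals the transmitted codeword $\mathbf{s}=\mathbf{A}\mathbf{x}$.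
   Context: Inner product: $\langle \mathbf{u},\mathbf{v}\rangle=\mathbf{v}^*\mathbf{u}$ on $\mathbb{C}^N$. MAD algorithm with $M=1$ (constellation $\mathcal{B}=\{1\}$): initialize $t=0$, $\hat{\mathcal{S}}=\emptyset$, residual $\mathbf{r}^{(0)}=\mathbf{y}$, estimate $\hat{\mathbf{x}}^{(0)}=\mathbf{0}$. While $t<K$: compute $c_i=\langle \mathbf{r}^{(t)},\mathbf{a}_i\rangle$ for $i\notin\hat{\mathcal{S}}$ and the metric $p_i=\mathrm{Re}\{c_i\}-\tfrac12$; select $\hat i=\arg\max_{i\notin\hat{\mathcal{S}}}p_i$; update $\hat{\mathcal{S}}\leftarrow\hat{\mathcal{S}}\cup\{\hat i\}$, $\hat{\mathbf{x}}^{(t+1)}=\hat{\mathbf{x}}^{(t)}+\mathbf{e}_{\hat i}$ ($\mathbf{e}_n$ the $n$-th standard basis vector of $\mathbb{C}^L$), $\mathbf{r}^{(t+1)}=\mathbf{r}^{(t)}-\mathbf{a}_{\hat i}$, and $t\leftarrow t+1$. Output $\hat{\mathbf{x}}^{(K)}$. *)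

(* Defs.v *)
(* Complex scalars: an arbitrary numClosedFieldType C
   (e.g. the complex numbers R[i] over a real closed field, or algC). *)
From HB Require Import structures.
From mathcomp Require Import all_boot all_order all_algebra.
Set Implicit Arguments. Unset Strict Implicit. Unset Printing Implicit Defensive.
Import Order.TTheory GRing.Theory Num.Theory.
Local Open Scope ring_scope.

Section MAD.
Variable C : numClosedFieldType.

Definition cdot (N : nat) (u v : 'cV[C]_N) : C :=
  \sum_(k < N) u k 0 * (v k 0)^*.

(* mutual coherence mu = max_{p <> q} |<a_p, a_q>| (0 if L <= 1) *)
Definition coherence (N L : nat) (A : 'M[C]_(N, L)) : C :=
  \big[Num.max/0]_(p < L) \big[Num.max/0]_(q < L | p != q)
     `|cdot (col p A) (col q A)|.

Definition ebasis (L : nat) (n : 'I_L) : 'cV[C]_L := delta_mx n 0.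

Definition indic_vec (L : nat) (S : {set 'I_L}) : 'cV[C]_L :=
  \col_(i < L) (if i \in S then 1 else 0).

Definition mad_metric (N L : nat) (A : 'M[C]_(N, L)) (r : 'cV[C]_N) (i : 'I_L) : C :=
  'Re (cdot r (col i A)) - 2^-1.

(* MAD state: (support estimate S^, estimate x^, residual r) *)
Definition mad_state (N L : nat) := ({set 'I_L} * 'cV[C]_L * 'cV[C]_N)%type.

(* One iteration of MAD (M = 1); the argmax is allowed to be any maximiser
   (arbitrary tie-breaking). *)
Definition mad_step (N L : nat) (A : 'M[C]_(N, L)) (st st' : mad_state N L) : Prop :=
  let: (Sh, x, r) := st in
  exists i : 'I_L,
    [/\ i \notin Sh,
        (forall j : 'I_L, j \notin Sh -> mad_metric A r j <= mad_metric A r i)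
      & st' = (i |: Sh, x + ebasis i, r - col i A)].

Definition mad_output (N L : nat) (A : 'M[C]_(N, L)) (y : 'cV[C]_N) (K : nat)
  (xout : 'cV[C]_L) : Prop :=
  exists st : nat -> mad_state N L,
    [/\ st 0%N = (set0, 0, y),
        (forall t, (t < K)%N -> mad_step A (st t) (st t.+1))
      & (st K).1.2 = xout].

End MAD.

(* Main.v *)
Require Import Defs.
From HB Require Import structures.
From mathcomp Require Import all_boot all_order all_algebra.
From mathcomp Require Import ring.
Import Order.TTheory GRing.Theory Num.Theory.
Local Open Scope ring_scope.




Lemma le_max_l (C : numClosedFieldType) (x y : C) : x \is Num.real -> y \is Num.real -> x <= Num.max x y.
Proof. by move=> hx hy; case: (real_leP hx hy). Qed.

Lemma le_max_r (C : numClosedFieldType) (x y : C) : x \is Num.real -> y \is Num.real -> y <= Num.max x y.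
Proof. by move=> hx hy; case: (real_leP hx hy) => // /ltW. Qed.

Lemma le_bigmax_real (C : numClosedFieldType) (I : finType) (P : pred I) (F : I -> C) i :
  P i -> (forall j, P j -> F j \is Num.real) ->
  F i <= \big[Num.max/0]_(j | P j) F j.
Proof.
move=> Pi hr; rewrite unlock.
have : i \in index_enum I by rewrite mem_index_enum.
elim: (index_enum I) => [//|a s IH]; rewrite inE /=.
have rb : \big[Num.max/0]_(j <- s | P j) F j \is Num.real.
  by apply: bigmax_real => // j Pj; exact: hr.
move: rb; rewrite unlock => rb.
case/orP=> [/eqP<-|ins]; first by rewrite Pi; apply: le_max_l => //; exact: hr.
case: ifP => Pa; last exact: IH.
apply: le_trans (IH ins) _; apply: le_max_r => //; exact: hr.
Qed.

Lemma coh_ge (C : numClosedFieldType) N L (A : 'M[C]_(N, L)) (p q : 'I_L) : p != q ->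
  `|cdot (col p A) (col q A)| <= coherence A.
Proof.
move=> pq; rewrite /coherence.
apply: le_trans (@le_bigmax_real C _ xpredT (fun p => \big[Num.max/0]_(q < L | p != q) `|cdot (col p A) (col q A)|) p _ _); last first.
- by move=> j _; apply: bigmax_real => // k _; exact: normr_real.
- by [].
by apply: (@le_bigmax_real C _ (fun q => p != q)) => // j _; exact: normr_real.
Qed.

Lemma cdot_mul (C : numClosedFieldType) N L (A : 'M[C]_(N, L)) (v : 'cV[C]_L) (w : 'cV[C]_N) :
  cdot (A *m v) w = \sum_i v i 0 * cdot (col i A) w.
Proof.
rewrite /cdot; under eq_bigr do rewrite mxE big_distrl.
rewrite exchange_big; apply: eq_bigr => i _; rewrite big_distrr.
by apply: eq_bigr => k _; rewrite !mxE /= mulrAC mulrC.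
Qed.

Lemma cdot_indic (C : numClosedFieldType) N L (A : 'M[C]_(N, L)) (D : {set 'I_L}) (w : 'cV[C]_N) :
  cdot (A *m indic_vec C D) w = \sum_(i in D) cdot (col i A) w.
Proof.
rewrite cdot_mul [RHS]big_mkcond; apply: eq_bigr => i _; rewrite mxE.
by case: ifP; rewrite ?mul1r ?mul0r.
Qed.

Lemma exists_max (C : numClosedFieldType) (T : finType) (P : pred T) (f : T -> C) :
  (forall i, f i \is Num.real) -> (exists i, P i) ->
  exists2 i, P i & forall j, P j -> f j <= f i.
Proof.
move=> fr [i0 Pi0].
suff: forall s : seq T, s != [::] ->
  exists2 i, i \in s & forall j, j \in s -> f j <= f i.
  have hE : forall x, (x \in enum P) = P x by move=> x; rewrite mem_enum.
  move=> /(_ (enum P)) [].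
  - by apply/eqP => e; have := hE i0; rewrite e in_nil Pi0.
  by move=> i; rewrite hE => Pi h; exists i => // j Pj; apply: h; rewrite hE.
elim=> [//|x s IH] _.
case: s IH => [|y s] IH.
  by exists x; rewrite ?inE // => j; rewrite inE => /eqP ->.
have [//|m ms hm] := IH.
case: (real_leP (fr x) (fr m)) => h.
  exists m; first by rewrite inE ms orbT.
  by move=> j; rewrite inE => /orP[/eqP->|/hm].
exists x; first by rewrite inE eqxx.
move=> j; rewrite inE => /orP[/eqP->//|/hm hj]; exact: le_trans hj (ltW h).
Qed.



Lemma Re_bound (C : numClosedFieldType) (z m : C) :
  `|z| <= m -> -m <= 'Re z /\ 'Re z <= m.
Proof.
move=> h; have h1 : `|'Re z| <= m := le_trans (leif_normC_Re_Creal z).1 h.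
split; [exact: real_lerNnormlW (Creal_Re z) h1|].
exact: le_trans (real_ler_norm (Creal_Re z)) h1.
Qed.

Arguments Re_bound {C z m}.
Arguments coh_ge {C N L} A {p q}.

Lemma arith_fin (C : numClosedFieldType) (mu a b : C) (n K : nat) :
  0 <= mu -> mu *+ (K + K) < 1 + mu -> (n <= K)%N ->
  a <= mu *+ n -> mu *- n + mu <= b -> a < 1 + b.
Proof.
move=> mu0 hmu hK up lo.
have hn' : (n + n <= K + K)%N := leq_add hK hK.
have h : mu *+ (n + n) < 1 + mu.
  apply: le_lt_trans hmu; rewrite -[mu *+ (n + n)]mulr_natr -[mu *+ (K + K)]mulr_natr; apply: ler_wpM2l => //.
  by rewrite ler_nat.
apply: (le_lt_trans up); apply: (@lt_le_trans _ _ (1 + (mu *- n + mu))); last by rewrite lerD2l.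
by rewrite addrCA addrC ltrBrDr -mulrnDr.
Qed.

Lemma key_bound (C : numClosedFieldType) N L (A : 'M[C]_(N, L)) (S Sh : {set 'I_L}) K j k :
  (forall i : 'I_L, cdot (col i A) (col i A) = 1) ->
  coherence A *+ (K + K) < 1 + coherence A ->
  0 <= coherence A ->
  (#|S :\: Sh| <= K)%N ->
  j \in S :\: Sh -> k \notin S ->
  mad_metric A (A *m indic_vec C (S :\: Sh)) k <
  mad_metric A (A *m indic_vec C (S :\: Sh)) j.
Proof.
move=> hn hmu mu0 hK jD kS.
set mu := coherence A in hmu mu0 *.
set D := S :\: Sh in hK jD *.
rewrite /mad_metric ltrD2r !cdot_indic !raddf_sum /=.
have up : \sum_(i in D) 'Re (cdot (col i A) (col k A)) <= mu *+ #|D|.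
  rewrite -sumr_const; apply: ler_sum => i iD.
  apply: (Re_bound (coh_ge A _)).2; apply: contraNneq kS => <-.
  by move: iD; rewrite inE => /andP[].
have Re1 : 'Re (1 : C) = 1 by apply/Creal_ReP; exact: rpred1.
have lo : - (mu *+ #|D|) + mu <= \sum_(i in D | i != j) 'Re (cdot (col i A) (col j A)).
  have e : \sum_(i in D) (- mu) = - mu + \sum_(i in D | i != j) (- mu).
    by rewrite (bigD1 j).
  move: e; rewrite sumr_const mulNrn => e.
  have -> : - (mu *+ #|D|) + mu = \sum_(i in D | i != j) (- mu).
    by rewrite e addrC addNKr.
  apply: ler_sum => i /andP[_ ij]; exact: (Re_bound (coh_ge A ij)).1.
rewrite [X in _ < X](bigD1 j) //= hn Re1.
exact: (arith_fin _ _ _ _ _ _ mu0 hmu hK up lo).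
Qed.


Definition Inv (C : numClosedFieldType) N L (A : 'M[C]_(N, L)) (S : {set 'I_L}) t
  (st : mad_state C N L) : Prop :=
  [/\ st.1.1 \subset S, #|st.1.1| = t, st.1.2 = indic_vec C st.1.1
    & st.2 = A *m indic_vec C (S :\: st.1.1)].

Arguments Inv {C N L} A S t st.

Lemma indic_add (C : numClosedFieldType) L (Sh : {set 'I_L}) i :
  i \notin Sh -> indic_vec C (i |: Sh) = indic_vec C Sh + ebasis C i.
Proof.
move=> iSh; apply/matrixP => a b; rewrite !mxE (ord1 b) eqxx andbT !inE.
case: (a =P i) => [->|_] /=; last by rewrite addr0.
by rewrite (negbTE iSh) add0r.
Qed.

Lemma indic_sub (C : numClosedFieldType) L (S Sh : {set 'I_L}) i :
  i \in S -> i \notin Sh ->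
  indic_vec C (S :\: Sh) - ebasis C i = indic_vec C (S :\: (i |: Sh)).
Proof.
move=> iS iSh; apply/matrixP => a b; rewrite !mxE (ord1 b) eqxx andbT !inE.
case: (a =P i) => [->|_] /=; last by rewrite subr0.
by rewrite (negbTE iSh) iS subrr.
Qed.

Lemma step_lemma (C : numClosedFieldType) N L (A : 'M[C]_(N, L)) (S : {set 'I_L}) K t
  (st : mad_state C N L) :
  (forall i : 'I_L, cdot (col i A) (col i A) = 1) ->
  coherence A *+ (K + K) < 1 + coherence A ->
  0 <= coherence A ->
  #|S| = K -> (t < K)%N -> Inv A S t st ->
  (exists i, i \notin st.1.1 /\
     forall j, j \notin st.1.1 -> mad_metric A st.2 j <= mad_metric A st.2 i) /\
  (forall st', mad_step A st st' -> Inv A S t.+1 st').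
Proof.
move=> hn hmu mu0 hS htK.
case: st => [[Sh x] r] [/= hsub hcard -> ->].
have cD : #|S :\: Sh| = (K - t)%N by rewrite cardsD (setIidPr hsub) hS hcard.
have DK : (#|S :\: Sh| <= K)%N by rewrite cD leq_subr.
have [j0 j0D] : exists j0, j0 \in S :\: Sh.
  by apply/set0Pn; rewrite -card_gt0 cD subn_gt0.
have j0Sh : j0 \notin Sh by move: j0D; rewrite inE => /andP[].
have inS : forall i, i \notin Sh ->
    (forall j, j \notin Sh -> mad_metric A (A *m indic_vec C (S :\: Sh)) j <=
                           mad_metric A (A *m indic_vec C (S :\: Sh)) i) -> i \in S.
  move=> i iSh hmax; apply/negPn/negP => iS.
  have := key_bound _ _ _ _ _ _ _ _ _ hn hmu mu0 DK j0D iS.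
  by move=> h; have := lt_le_trans h (hmax j0 j0Sh); rewrite ltxx.
split.
  have fr : forall j, mad_metric A (A *m indic_vec C (S :\: Sh)) j \is Num.real.
    move=> j; rewrite /mad_metric rpredB ?Creal_Re //; by apply: ger0_real; rewrite invr_ge0 ler0n.
  have [i Pi hi] := exists_max C _ [pred j | j \notin Sh]
      (mad_metric A (A *m indic_vec C (S :\: Sh))) fr (ex_intro _ j0 j0Sh).
  by exists i; split.
move=> st' [i [iSh hmax ->]].
have iS := inS i iSh hmax.
split => /=.
- by rewrite subUset sub1set iS hsub.
- by rewrite cardsU1 iSh hcard.
- by rewrite indic_add.
- by rewrite colE -mulmxBr indic_sub.
Qed.


Definition nxt (C : numClosedFieldType) N L (A : 'M[C]_(N, L)) (st : mad_state C N L)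
  : mad_state C N L :=
  match [pick i | (i \notin st.1.1) &&
     [forall j, (j \notin st.1.1) ==> (mad_metric A st.2 j <= mad_metric A st.2 i)]] with
  | Some i => (i |: st.1.1, st.1.2 + ebasis C i, st.2 - col i A)
  | None => st
  end.
Arguments nxt {C N L} A st.

Lemma nxt_step (C : numClosedFieldType) N L (A : 'M[C]_(N, L)) (st : mad_state C N L) :
  (exists i, i \notin st.1.1 /\
     forall j, j \notin st.1.1 -> mad_metric A st.2 j <= mad_metric A st.2 i) ->
  mad_step A st (nxt A st).
Proof.
case: st => [[Sh x] r] /= [i0 [i0Sh h0]]; rewrite /nxt /=.
case: pickP => [i /andP[iSh /forallP h]|none].
  by exists i; split => // j jSh; exact: (implyP (h j)).
exfalso; move: (none i0); rewrite i0Sh /=; move/negP; apply.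
by apply/forallP => j; apply/implyP; exact: h0.
Qed.

Lemma hmu_lemma (C : numClosedFieldType) (mu : C) K :
  0 < mu -> K%:R < 2^-1 * (mu^-1 + 1) -> mu *+ (K + K) < 1 + mu.
Proof.
move=> mu0; rewrite ltr_pdivlMl ?ltr0n // -(ltr_pM2r mu0).
have mun : mu != 0 by rewrite gt_eqF.
have -> : (mu^-1 + 1) * mu = 1 + mu by rewrite mulrDl mulVf // mul1r.
have -> : mu *+ (K + K) = 2 * K%:R * mu by rewrite -[mu *+ _]mulr_natr natrD; ring.
by [].
Qed.

Theorem lemma1 (C : numClosedFieldType) (N L : nat) (A : 'M[C]_(N, L))
  (K : nat) (S : {set 'I_L}) :
  (forall i : 'I_L, cdot (col i A) (col i A) = 1) ->
  0 < coherence A ->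
  (0 < K)%N ->
  K%:R < 2^-1 * ((coherence A)^-1 + 1) ->
  #|S| = K ->
  let x := indic_vec C S in
  let y := A *m x in
  (exists xout, mad_output A y K xout) /\
  (forall xout, mad_output A y K xout -> xout = x /\ A *m xout = A *m x).
Proof.
move=> hn hmu0 hK0 hKlt hS x y.
have mu0 := ltW hmu0.
have hmu := hmu_lemma _ _ _ hmu0 hKlt.
have inv0 : Inv A S 0 (set0, 0, y).
  split => /=; rewrite ?sub0set ?cards0 ?setD0 //.
  by apply/matrixP => a b; rewrite !mxE inE.
have fin : forall st : mad_state C N L, Inv A S K st -> st.1.2 = x.
  case=> [[Sh xx] r] [/= hsub hc -> _].
  have -> // : Sh = S by apply/eqP; rewrite eqEcard hsub hS hc leqnn.
split.
  pose st t := iter t (nxt A) (set0, 0, y).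
  have H : forall t, (t <= K)%N -> Inv A S t (st t).
    elim=> [//|t IH] ht.
    have ht' : (t < K)%N by [].
    have [ex hst] := step_lemma _ _ _ _ _ _ _ _ hn hmu mu0 hS ht' (IH (ltnW ht)).
    exact: hst (nxt_step _ _ _ _ _ ex).
  exists (st K).1.2; exists st; split => //.
  move=> t ht.
  have [ex _] := step_lemma _ _ _ _ _ _ _ _ hn hmu mu0 hS ht (H t (ltnW ht)).
  exact: nxt_step _ _ _ _ _ ex.
move=> xout [st [h0 hstep <-]].
have H : forall t, (t <= K)%N -> Inv A S t (st t).
  elim=> [|t IH] ht; first by rewrite h0.
  have [_ hst] := step_lemma _ _ _ _ _ _ _ _ hn hmu mu0 hS ht (IH (ltnW ht)).
  exact: hst (hstep t ht).
by rewrite (fin _ (H K (leqnn K))).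
Qed.
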